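(* Let $c,\rho\in(0,1)$ with $c+\rho>1$. Suppose the conditional gradient algorithm chooses $\theta_k\in[0,1]$ with $\rho\hat\theta_k\le\theta_k\le\hat\theta_k$, where \[ \hat\theta_k=\max\{\theta\in[0,1]:(1-\theta)\mathrm{gap}(x_k,g_k)+\mathcal D(x_k,s_k,\theta)\le(1-c\theta)\mathrm{gap}(x_k,g_k)\}. \] Suppose $q>1$, $r\in[0,1]$ are such that $(\mathcal D,\mathrm{gap})$ satisfies the $(q,r)$-growth property with some finite $M>0$. Then for $k=0,1,\dots$ \[ \mathrm{gap}_{k+1}\le\mathrm{gap}_k\Big(1-(c+\rho-1)\min\Big\{1,\Big(\tfrac{q(1-c)}{M}\mathrm{gap}_k^{1-r}\Big)^{\frac1{q-1}}\Big\}\Big). \] If $r=1$ then $\mathrm{gap}_k\le\mathrm{gap}_0\big(1-(c+\rho-1)\min\{1,(q(1-c)/M)^{1/(q-1)}\}\big)^k$. If $r\in[0,1)$ then $\mathrm{gap}_k\le\mathrm{gap}_0(1-(c+\rho-1))^k$ for $k=0,\dots,k_0$, where $k_0$ is the smallest $k$ with $\mathrm{gap}_k^{1-r}\le\frac{M}{q(1-c)}$, and for $k\ge k_0$ \[ \mathrm{gap}_k\le\Big(\mathrm{gap}_{k_0}^{\frac{r-1}{q-1}}+\frac{(1-r)(c+\rho-1)}{q-1}\Big(\frac{q(1-c)}{M}\Big)^{\frac1{q-1}}(k-k_0)\Big)^{\frac{q-1}{r-1}}. \]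
   Context: Let $f,\Psi:\mathbb{R}^n\to\mathbb{R}\cup\{\infty\}$ be closed proper convex functions such that (A1) $f$ is differentiable on $\mathrm{dom}(\Psi)$, and (A2) for every $x\in\mathrm{dom}(f)$ the set $\arg\min_s\{\langle\nabla f(x),s\rangle+\Psi(s)\}$ is nonempty. $f^*,\Psi^*$ denote convex conjugates; $\arg\min_y\{\langle g,y\rangle+\Psi(y)\}=\partial\Psi^*(-g)$. $D_f(y,x)=f(y)-f(x)-\langle\nabla f(x),y-x\rangle$. Duality gap: $\mathrm{gap}(x,u)=f(x)+\Psi(x)+f^*(u)+\Psi^*(-u)$ for $x\in\mathrm{dom}(\Psi)$, $u\in\mathrm{dom}(f^* )$. For $x,s\in\mathrm{dom}(\Psi)$, $\theta\in[0,1]$: $\mathcal{D}(x,s,\theta)=D_f(x+\theta(s-x),x)+\Psi(x+\theta(s-x))-(1-\theta)\Psi(x)-\theta\Psi(s)$. Conditional gradient algorithm: given $x_0\in\mathrm{dom}(\Psi)$, for $k=0,1,2,\dots$ let $g_k=\nabla f(x_k)$, pick $s_k\in\arg\min_y\{\langle g_k,y\rangle+\Psi(y)\}$ and $\theta_k\in[0,1]$, and set $x_{k+1}=(1-\theta_k)x_k+\theta_k s_k$. The best duality gaps are $\mathrm{gap}_k=\min_{i=0,\dots,k}\mathrm{gap}(x_k,g_i)$. $(q,r)$-growth property ($q>1$, $r\in[0,1]$): there is a finite $M>0$ such that for all $x\in\mathrm{dom}(\Psi)$, $g=\nabla f(x)$ and $s\in\partial\Psi^*(-g)$, $\mathcal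 D(x,s,\theta)\le \frac{M\theta^q}{q}\mathrm{gap}(x,g)^r$ for all $\theta\in[0,1]$. *)

(* Defs.v *)
From HB Require Import structures.
From mathcomp Require Import all_boot all_order all_algebra.
From mathcomp Require Import all_classical all_reals all_analysis.
Set Implicit Arguments. Unset Strict Implicit. Unset Printing Implicit Defensive.
Import Order.TTheory GRing.Theory Num.Theory.
Local Open Scope classical_set_scope.
Local Open Scope ring_scope.

Section Defs.
Variables (R : realType) (n : nat).
Notation vec := 'rV[R]_n.

Definition dot (u v : vec) : R := \sum_(i < n) u 0 i * v 0 i.
Definition enorm (h : vec) : R := Num.sqrt (dot h h).

Definition dom (h : vec -> \bar R) : set vec := [set x | (h x < +oo)%E].

Definition proper_fun (h : vec -> \bar R) : Prop :=
  (forall x, h x != -oo%E) /\ (exists x, (h x < +oo)%E).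

(* convex (extended-valued, with 0 * (+oo) = 0) *)
Definition convex_fun (h : vec -> \bar R) : Prop :=
  forall (x y : vec) (t : R), 0 <= t <= 1 ->
    (h ((1 - t) *: x + t *: y : vec)%R <= (1 - t)%:E * h x + t%:E * h y)%E.

(* closed = lower semicontinuous *)
Definition closed_fun (h : vec -> \bar R) : Prop :=
  forall x (a : R), (a%:E < h x)%E ->
    exists2 d : R, 0 < d & forall y, enorm (y - x) < d -> (a%:E < h y)%E.

Definition closed_proper_convex (h : vec -> \bar R) : Prop :=
  [/\ closed_fun h, proper_fun h & convex_fun h].

Definition conjugate (h : vec -> \bar R) (u : vec) : \bar R :=
  ereal_sup [set ((dot u x)%:E - h x)%E | x in [set: vec]].

Definition is_gradient (h : vec -> \bar R) (x g : vec) : Prop :=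
  h x \is a fin_num /\
  forall e : R, 0 < e -> exists2 d : R, 0 < d & forall y, enorm (y - x) < d ->
     h y \is a fin_num /\
     `| fine (h y) - fine (h x) - dot g (y - x) | <= e * enorm (y - x).

Definition argmin_lin (Psi : vec -> \bar R) (g : vec) : set vec :=
  [set s | forall y, ((dot g s)%:E + Psi s <= (dot g y)%:E + Psi y)%E].

Definition subdiff (h : vec -> \bar R) (u : vec) : set vec :=
  [set s | h u \is a fin_num /\
           forall v, (h u + (dot s (v - u))%:E <= h v)%E].

(* Bregman distance D_f(y,x) (used for x, y in dom Psi, where f is finite) *)
Definition bregman (f : vec -> \bar R) (gradf : vec -> vec) (y x : vec) : R :=
  fine (f y) - fine (f x) - dot (gradf x) (y - x).

(* D(x,s,theta), for x, s in dom Psi (all terms are then finite) *)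
Definition Dcal (f Psi : vec -> \bar R) (gradf : vec -> vec)
    (x s : vec) (th : R) : R :=
  let z := x + th *: (s - x) in
  bregman f gradf z x + fine (Psi z) - (1 - th) * fine (Psi x) - th * fine (Psi s).

Definition gap (f Psi : vec -> \bar R) (x u : vec) : \bar R :=
  (f x + Psi x + conjugate f u + conjugate Psi (- u))%E.

Definition growth_prop (f Psi : vec -> \bar R) (gradf : vec -> vec)
    (q r M : R) : Prop :=
  forall x, dom Psi x -> forall s, subdiff (conjugate Psi) (- gradf x) s ->
  forall th : R, 0 <= th <= 1 ->
    Dcal f Psi gradf x s th <=
      M * (th `^ q) / q * (fine (gap f Psi x (gradf x)) `^ r).

Definition is_max_of (S : set R) (t : R) : Prop :=
  S t /\ forall u, S u -> u <= t.

(* the best duality gap  gap_k = min_{i=0..k} gap(x_k, g_i) *)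
Definition best_gap (f Psi : vec -> \bar R) (gradf : vec -> vec)
    (x : nat -> vec) (k : nat) : \bar R :=
  \big[mine/+oo%E]_(i < k.+1) gap f Psi (x k) (gradf (x i)).

End Defs.

(* Main.v *)
Require Import Defs.
From HB Require Import structures.
From mathcomp Require Import all_boot all_order all_algebra.
From mathcomp Require Import all_classical all_reals all_analysis.
From mathcomp Require Import ring lra.
Set Implicit Arguments. Unset Strict Implicit.
Import Order.TTheory GRing.Theory Num.Theory.
Local Open Scope classical_set_scope.
Local Open Scope ring_scope.

Section Vec.
Variables (R : realType) (n : nat).
Implicit Types u v w : 'rV[R]_n.

Lemma dotC u v : dot u v = dot v u.
Proof. by rewrite /dot; apply: eq_bigr => i _; rewrite mulrC. Qed.
Lemma dotDr u v w : dot u (v + w) = dot u v + dot u w.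
Proof. by rewrite /dot -big_split; apply: eq_bigr => i _; rewrite !mxE mulrDr. Qed.
Lemma dotZr u v (a : R) : dot u (a *: v) = a * dot u v.
Proof. by rewrite /dot mulr_sumr; apply: eq_bigr => i _; rewrite !mxE mulrCA. Qed.
Lemma dotNr u v : dot u (- v) = - dot u v.
Proof. by rewrite -scaleN1r dotZr mulN1r. Qed.
Lemma dotBr u v w : dot u (v - w) = dot u v - dot u w.
Proof. by rewrite dotDr dotNr. Qed.
Lemma dotNl u v : dot (- u) v = - dot u v.
Proof. by rewrite dotC dotNr dotC. Qed.
Lemma dot0r u : dot u 0 = 0.
Proof. by rewrite -(scale0r (0 : 'rV[R]_n)) dotZr mul0r. Qed.

Lemma enorm_ge0 u : 0 <= enorm u.
Proof. exact: sqrtr_ge0. Qed.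
Lemma enormZ u (a : R) : 0 <= a -> enorm (a *: u) = a * enorm u.
Proof.
move=> a0; rewrite /enorm dotZr dotC dotZr mulrA -expr2 sqrtrM ?sqr_ge0 //.
by rewrite sqrtr_sqr ger0_norm.
Qed.

Lemma vec_id1 u v (t : R) : u + t *: (v - u) = (1 - t) *: u + t *: v.
Proof. by apply/matrixP => i j; rewrite !mxE; ring. Qed.
Lemma vec_id2 u v (t : R) : ((1 - t) *: u + t *: v) - u = t *: (v - u).
Proof. by apply/matrixP => i j; rewrite !mxE; ring. Qed.
Lemma vec_id3 u v (t th : R) :
  u + (t * th) *: (v - u) = (1 - t) *: u + t *: (u + th *: (v - u)).
Proof. by apply/matrixP => i j; rewrite !mxE; ring. Qed.
Lemma vec_id4 u : u + 0 *: (u - u) = u.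
Proof. by rewrite scale0r addr0. Qed.
End Vec.
Section Grad.
Variables (R : realType) (n : nat).
Local Notation vec := 'rV[R]_n.

Lemma grad_ineq (f : vec -> \bar R) (x g : vec) :
  convex_fun f -> proper_fun f -> is_gradient f x g ->
  forall y, (f x + (dot g (y - x))%:E <= f y)%E.
Proof.
move=> cvx [pinf _] [fx grad] y.
case Efy: (f y) => [b| |]; last first.
- by move: (pinf y); rewrite Efy.
- by rewrite leey.
rewrite -(fineK fx) -EFinD lee_fin.
set a := fine (f x); set D := dot g (y - x).
rewrite leNgt; apply/negP => H.
set eps := a + D - b.
have eps0 : 0 < eps by rewrite /eps; lra.
set N := enorm (y - x).
have N0 : 0 <= N := enorm_ge0 _.
set e := eps / (2 * (N + 1)).
have eE : e * (2 * (N + 1)) = eps by rewrite /e divfK // mulf_neq0 // gt_eqF //; lra.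
have e0 : 0 < e by rewrite /e divr_gt0 //; lra.
have [d d0 Hd] := grad e e0.
set t := Num.min 1 (d / (N + 1)).
have dN0 : 0 < d / (N + 1) by rewrite divr_gt0 //; lra.
have t0 : 0 < t by rewrite /t lt_min ltr01 dN0.
have t1 : t <= 1 by rewrite /t ge_min lexx.
have tN : t * N < d.
  have : t <= d / (N + 1) by rewrite /t ge_min lexx orbT.
  rewrite ler_pdivlMr; last lra.
  move=> h; nra.
have := cvx x y t; rewrite t1 (ltW t0) => /(_ isT).
have zx : enorm (((1 - t) *: x + t *: y) - x) = t * N.
  by rewrite vec_id2 enormZ // ltW.
have [fzfin Hz] := Hd ((1 - t) *: x + t *: y) (ltac:(by rewrite zx)).
rewrite -(fineK fzfin) -(fineK fx) Efy -!EFinM -EFinD lee_fin.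
move: Hz; rewrite vec_id2 enormZ ?(ltW t0) // dotZr -/a -/D -/N.
set fz := fine (f _).
move=> Hz Hc.
move: Hz; rewrite ler_norml => /andP[Hl _].
have h1 : t * eps <= t * (e * N) by rewrite /eps; nra.
have h2 : eps <= e * N by rewrite -(ler_pM2l t0).
clear -eE h2 e0 N0 eps0; nra.
Qed.
End Grad.

Lemma geom_small (R : realType) (b eps : R) : 0 <= b < 1 -> 0 < eps ->
  exists N : nat, b ^+ N < eps.
Proof.
move=> /andP[b0 b1] e0.
have hc := @cvg_expr R b (ltac:(by rewrite ger0_norm)).
have := cvgr_lt _ hc _ e0.
by move=> [N _ HN]; exists N; apply: HN => /=.
Qed.

Lemma powR_anti (R : realType) (x y t : R) : 0 < x -> x <= y -> 0 < t ->
  y `^ (- t) <= x `^ (- t).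
Proof.
move=> x0 xy t0; rewrite !powRN lef_pV2 ?posrE ?powR_gt0 //; last exact: lt_le_trans xy.
by apply: ge0_ler_powR; rewrite ?nnegrE ?(ltW t0) ?(ltW x0) //; apply: le_trans xy; exact: ltW.
Qed.

Lemma bern (R : realType) (t al : R) : 0 <= t < 1 -> 0 < al ->
  1 + al * t <= (1 - t) `^ (- al).
Proof.
move=> /andP[t0 t1] a0.
have p : 0 < 1 - t by lra.
rewrite /powR gt_eqF //.
have hl : ln (1 - t) <= - t.
  have := expR_ge1Dx (ln (1 - t)); rewrite lnK ?posrE //; lra.
apply: le_trans (expR_ge1Dx _) _.
rewrite ler_expR; nra.
Qed.

Section Rate.
Variables (R : realType) (c rho q r M : R) (e : nat -> R).
Hypotheses (hc : 0 < c < 1) (hrho : 0 < rho < 1) (hcr : 1 < c + rho)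
  (hq : 1 < q) (hr : 0 <= r <= 1) (hM : 0 < M)
  (e0 : forall k, 0 <= e k)
  (H : forall k, e k.+1 <= e k * (1 - (c + rho - 1) *
   Num.min 1 ((q * (1 - c) / M * (e k `^ (1 - r))) `^ (q - 1)^-1))).

Let c0 : 0 < c. Proof. by case/andP: hc. Qed.
Let c1 : c < 1. Proof. by case/andP: hc. Qed.
Let rho0 : 0 < rho. Proof. by case/andP: hrho. Qed.
Let rho1 : rho < 1. Proof. by case/andP: hrho. Qed.
Let r0 : 0 <= r. Proof. by case/andP: hr. Qed.
Let r1 : r <= 1. Proof. by case/andP: hr. Qed.
Ltac hyps := have := hq; have := c0; have := c1; have := rho0; have := rho1;
  have := r0; have := r1; have := hM; have := hcr; move=> *.

Let A := q * (1 - c) / M.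
Let A0 : 0 < A.
Proof. hyps; rewrite /A; apply: divr_gt0 => //; apply: mulr_gt0; lra. Qed.

Lemma mono_e k : e k.+1 <= e k.
Proof.
hyps; apply: le_trans (H k) _; rewrite ler_piMr // lerBlDr lerDl.
apply: mulr_ge0; first lra.
by rewrite le_min ler01 powR_ge0.
Qed.

Lemma mono_e2 k j : e (k + j)%N <= e k.
Proof.
elim: j => [|j IH]; first by rewrite addn0.
by rewrite addnS; apply: le_trans (mono_e _) IH.
Qed.

Lemma rate_r1 : r = 1 -> forall k, e k <= e 0%N * (1 - (c + rho - 1) *
       Num.min 1 ((q * (1 - c) / M) `^ (q - 1)^-1)) ^+ k.
Proof.
move=> r1' k; hyps.
set gam := 1 - _.
have g0 : 0 <= gam.
  rewrite /gam subr_ge0; have : Num.min 1 ((q * (1 - c) / M) `^ (q - 1)^-1) <= 1 by rewrite ge_min lexx.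
  move: (le_min 0 1 ((q * (1 - c) / M) `^ (q - 1)^-1)); rewrite ler01 powR_ge0 /= => /esym hm.
  nra.
elim: k => [|k IH]; first by rewrite expr0 mulr1.
apply: le_trans (H k) _.
rewrite r1' subrr powRr0 mulr1 -/gam exprSr mulrA.
by apply: ler_wpM2r.
Qed.


Let T := M / (q * (1 - c)).
Let T0 : 0 < T.
Proof. hyps; rewrite /T; apply: divr_gt0 => //; apply: mulr_gt0; lra. Qed.
Let AT : A * T = 1.
Proof. hyps; rewrite /A /T; field; apply/and3P; split; rewrite ?gt_eqF //; lra. Qed.
Let p := (q - 1)^-1.
Let p0 : 0 < p.
Proof. hyps; rewrite /p invr_gt0; lra. Qed.
Let kap := c + rho - 1.
Let kap0 : 0 < kap. Proof. hyps; rewrite /kap; lra. Qed.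
Let kap1 : kap < 1. Proof. hyps; rewrite /kap; lra. Qed.

Lemma big_step k : T < e k `^ (1 - r) -> e k.+1 <= e k * (1 - kap).
Proof.
move=> hT; apply: le_trans (H k) _; rewrite -/A -/p -/kap.
have X1 : 1 <= A * e k `^ (1 - r).
  by rewrite -[X in X <= _]AT; apply: ltW; rewrite ltr_pM2l; [exact: hT | exact: A0].
rewrite min_l ?mulr1 //.
by rewrite -{1}(powRr0 (A * e k `^ (1 - r))); apply: ler_powR => //; exact: ltW.
Qed.

Let al := (1 - r) * p.
Lemma small_step k : e k `^ (1 - r) <= T ->
  e k.+1 <= e k * (1 - kap * (A `^ p * e k `^ al)) /\ A `^ p * e k `^ al <= 1.
Proof.
move=> hT.
have X0 : 0 <= A * e k `^ (1 - r) by apply: mulr_ge0; [exact: ltW|exact: powR_ge0].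
have X1 : A * e k `^ (1 - r) <= 1.
  by rewrite -[X in _ <= X]AT; apply: ler_wpM2l => //; exact: ltW A0.
have E : (A * e k `^ (1 - r)) `^ p = A `^ p * e k `^ al.
  by rewrite powRM ?powR_ge0 ?(ltW A0) // -powRrM.
have Y1 : (A * e k `^ (1 - r)) `^ p <= 1.
  have := @ge0_ler_powR R p (ltW p0) _ _ X0 ler01 X1.
  by rewrite powR1.
rewrite -E; split => //.
by apply: le_trans (H k) _; rewrite -/A -/p -/kap min_r.
Qed.

Lemma rate_rlt1 : r < 1 -> exists k0 : nat,
    (e k0 `^ (1 - r) <= M / (q * (1 - c))) /\
    (forall k, (k < k0)%N -> M / (q * (1 - c)) < e k `^ (1 - r)) /\
    (forall k, (k <= k0)%N -> e k <= e 0%N * (1 - (c + rho - 1)) ^+ k) /\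
    (forall k, (k0 <= k)%N -> e k <= (e k0 `^ ((r - 1) / (q - 1))
                 + (1 - r) * (c + rho - 1) / (q - 1) * (q * (1 - c) / M) `^ (q - 1)^-1
                   * (k - k0)%:R) `^ ((q - 1) / (r - 1))).
Proof.
move=> rlt1; hyps.
rewrite -/T -/A -/p -/kap.
have := kap0; have := kap1; have := T0; have := p0; have := A0; move=> *.
have b0 : 0 <= 1 - kap by lra.
set P := fun k => e k `^ (1 - r) <= T.
have exP : exists k, P k.
  have [//|nex] := pselect (exists k, P k); exfalso.
  have hT : forall k, T < e k `^ (1 - r).
    by move=> k; rewrite ltNge; apply/negP => h; apply: nex; exists k.
  have hgeo : forall k, e k <= e 0%N * (1 - kap) ^+ k.
    elim=> [|k IH]; first by rewrite expr0 mulr1.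
    apply: le_trans (big_step (hT k)) _; rewrite exprSr mulrA.
    exact: ler_wpM2r.
  set eps := T `^ (1 - r)^-1.
  have eps0 : 0 < eps by rewrite /eps powR_gt0.
  have epsT : eps `^ (1 - r) = T.
    by rewrite /eps -powRrM mulVf ?powRr1 ?(ltW T0) // gt_eqF //; lra.
  have [N hN] := @geom_small R (1 - kap) (eps / (e 0%N + 1)) (ltac:(apply/andP; split; lra))
    (ltac:(apply: divr_gt0 => //; have := e0 0%N; lra)).
  have eN : e N < eps.
    apply: le_lt_trans (hgeo N) _.
    move: hN; rewrite ltr_pdivlMr; last by have := e0 0%N; lra.
    have := exprn_ge0 N b0; have := e0 0%N; nra.
  have := hT N; rewrite -epsT ltNge; apply/negP/negPn.
  by apply: ge0_ler_powR; rewrite ?nnegrE ?e0 ?(ltW eps0) ?(ltW eN) //; lra.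
case: (ex_minnP exP) => k0 Pk0 mink0; exists k0.
split; first exact: Pk0.
have hlt : forall k, (k < k0)%N -> T < e k `^ (1 - r).
  move=> k hk; rewrite ltNge; apply/negP => h.
  by have := mink0 k h; rewrite leqNgt hk.
split; first exact: hlt.
split.
  elim=> [|k IH] hk; first by rewrite expr0 mulr1.
  apply: le_trans (big_step (hlt k hk)) _; rewrite exprSr mulrA.
  exact: ler_wpM2r (IH (ltnW hk)).
move=> k hk.
have [j ->] : exists j, k = (k0 + j)%N by exists (k - k0)%N; rewrite subnKC.
rewrite addKn.
have al0 : 0 < al by rewrite /al; apply: mulr_gt0 => //; lra.
set be := kap * A `^ p.
have be0 : 0 <= be by apply: mulr_ge0; [exact: ltW | exact: powR_ge0].
have -> : (r - 1) / (q - 1) = - al by rewrite /al /p; ring.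
have -> : (q - 1) / (r - 1) = - al^-1.
  rewrite /al /p invfM invrK; field.
  by apply/andP; split; [rewrite gt_eqF // | rewrite lt_eqF //]; lra.
have -> : (1 - r) * kap / (q - 1) * A `^ p = al * be by rewrite /al /be /p; ring.
have hsm : forall i, (k0 <= i)%N -> e i `^ (1 - r) <= T.
  move=> i hi; apply: le_trans Pk0.
  have [l ->] : exists l, i = (k0 + l)%N by exists (i - k0)%N; rewrite subnKC.
  apply: ge0_ler_powR; rewrite ?nnegrE ?e0 //; first lra.
  exact: mono_e2.
have [ek0|ek0] := eqVneq (e k0) 0.
  apply: le_trans (powR_ge0 _ _).
  by rewrite -ek0; apply: mono_e2.
have ek0p : 0 < e k0 by rewrite lt_def ek0 e0.
have J : forall j, e (k0 + j)%N = 0 \/ (0 < e (k0 + j)%N /\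
    e k0 `^ (- al) + al * be * j%:R <= e (k0 + j)%N `^ (- al)).
  elim=> [|i [z|[ep IH]]].
  - by right; rewrite addn0 mulr0 addr0.
  - left; apply/eqP; rewrite eq_le e0 andbT -z addnS; exact: mono_e.
  - have [z|nz] := eqVneq (e (k0 + i.+1)%N) 0; first by left.
    right; have ep' : 0 < e (k0 + i.+1)%N by rewrite lt_def nz e0.
    split => //.
    have [hs Mv1] := small_step (hsm _ (leq_addr i k0)).
    rewrite -addnS in hs.
    set E := e (k0 + i)%N in ep IH hs Mv1 *.
    set E' := e (k0 + i.+1)%N in ep' hs *.
    set Mv := A `^ p * E `^ al in hs Mv1.
    have Mv0 : 0 <= Mv by rewrite /Mv; apply: mulr_ge0; exact: powR_ge0.
    set t := kap * Mv in hs.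
    have t0 : 0 <= t by apply: mulr_ge0 => //; exact: ltW.
    have t1 : t < 1 by rewrite /t; nra.
    have h1 := powR_anti ep' hs al0.
    rewrite powRM ?(ltW ep) // in h1; last lra.
    have h2 : 1 + al * t <= (1 - t) `^ (- al) by apply: bern => //; rewrite t0 t1.
    have Ea : 0 <= E `^ (- al) := powR_ge0 _ _.
    have h3 : E `^ (- al) * (1 + al * t) <= E `^ (- al) * (1 - t) `^ (- al).
      exact: ler_wpM2l.
    have h4 : E `^ (- al) * (1 + al * t) = E `^ (- al) + al * be.
      rewrite /t /Mv /be powRN.
      have : E `^ al != 0 by rewrite gt_eqF // powR_gt0.
      move=> hne; field.
      done.
    rewrite -addn1 natrD.
    lra.
case: (J j) => [->|[ep IH]]; first exact: powR_ge0.
set X := _ + _ in IH *.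
have X0 : 0 < X.
  rewrite /X; apply: lt_le_trans (_ : e k0 `^ (- al) <= _).
    exact: powR_gt0.
  by rewrite lerDl; apply: mulr_ge0 => //; apply: mulr_ge0 => //; exact: ltW.
have ai0 : 0 < al^-1 by rewrite invr_gt0.
have := powR_anti X0 IH ai0.
rewrite -powRrM mulrN mulNr opprK mulfV ?gt_eqF // powRr1 //; exact: ltW.
Qed.

End Rate.

Lemma conj_ge (R : realType) n (h : 'rV[R]_n -> \bar R) u y :
  ((dot u y)%:E - h y <= conjugate h u)%E.
Proof. by apply: ereal_sup_ubound; exists y. Qed.

Lemma vec_id5 (R : realType) n (u v : 'rV[R]_n) : (u + v) - u = v.
Proof. by apply/matrixP => i j; rewrite !mxE; ring. Qed.

Lemma vec_id6 (R : realType) n (u v : 'rV[R]_n) (t th : R) :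
  (1 - t * th) *: u + (t * th) *: v = (1 - t) *: u + t *: ((1 - th) *: u + th *: v).
Proof. by apply/matrixP => i j; rewrite !mxE; ring. Qed.

Section Main.
Variables (R : realType) (n : nat)
  (f Psi : 'rV[R]_n -> \bar R) (gradf : 'rV[R]_n -> 'rV[R]_n)
  (c rho q r M : R)
  (x s : nat -> 'rV[R]_n) (theta thetahat : nat -> R).
Local Notation vec := 'rV[R]_n.
Hypotheses (hf : closed_proper_convex f) (hPsi : closed_proper_convex Psi)
  (hgrad : forall y, dom Psi y -> is_gradient f y (gradf y))
  (hc : 0 < c < 1) (hrho : 0 < rho < 1) (hcr : 1 < c + rho)
  (hx0 : dom Psi (x 0%N))
  (hs : forall k, argmin_lin Psi (gradf (x k)) (s k))
  (hth : forall k, 0 <= theta k <= 1)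
  (hx : forall k, x k.+1 = (1 - theta k) *: x k + theta k *: s k)
  (hmax : forall k, is_max_of
     [set th : R | 0 <= th <= 1 /\
        ((1 - th)%:E * gap f Psi (x k) (gradf (x k))
          + (Dcal f Psi gradf (x k) (s k) th)%:E
        <= (1 - c * th)%:E * gap f Psi (x k) (gradf (x k)))%E]
     (thetahat k))
  (hthr : forall k, rho * thetahat k <= theta k <= thetahat k)
  (hq : 1 < q) (hr : 0 <= r <= 1) (hM : 0 < M)
  (hgr : growth_prop f Psi gradf q r M).

Let c0 : 0 < c. Proof. by case/andP: hc. Qed.
Let c1 : c < 1. Proof. by case/andP: hc. Qed.
Let rho0 : 0 < rho. Proof. by case/andP: hrho. Qed.
Let rho1 : rho < 1. Proof. by case/andP: hrho. Qed.
Let r0 : 0 <= r. Proof. by case/andP: hr. Qed.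
Let r1 : r <= 1. Proof. by case/andP: hr. Qed.

Ltac hyps := have := hq; have := c0; have := c1; have := rho0; have := rho1;
  have := r0; have := r1; have := hM; have := hcr; move=> *.

Lemma dom_fin y : dom Psi y -> Psi y \is a fin_num.
Proof.
case: hPsi => _ [pinf _] _; rewrite /dom /= => h.
by rewrite fin_numE (pinf y) lt_eqF.
Qed.

Lemma f_fin y : dom Psi y -> f y \is a fin_num.
Proof. by move=> /hgrad []. Qed.

Lemma conv_dom u v th : 0 <= th <= 1 -> dom Psi u -> dom Psi v ->
  dom Psi ((1 - th) *: u + th *: v).
Proof.
case: hPsi => _ _ cv th01 du dv; rewrite /dom /=.
apply: (le_lt_trans (cv u v th th01)).
rewrite -(fineK (dom_fin du)) -(fineK (dom_fin dv)) -!EFinM -EFinD.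
exact: ltry.
Qed.

Lemma s_dom k : dom Psi (s k).
Proof.
case: hPsi => _ [pinf [y hy]] _; rewrite /dom /=.
have := hs k y; case E: (Psi (s k)) => [b| |].
- by move=> _; exact: ltry.
- rewrite addey // => h; exfalso; move: h.
  by rewrite -(fineK (dom_fin hy)) -EFinD leNgt ltry.
- by move: (pinf (s k)); rewrite E.
Qed.

Lemma x_dom k : dom Psi (x k).
Proof.
elim: k => [//|k IH]; rewrite hx; apply: conv_dom => //; exact: s_dom.
Qed.

Local Notation g k := (gradf (x k)).
Definition fx k := fine (f (x k)).
Definition px k := fine (Psi (x k)).
Definition ps k := fine (Psi (s k)).

Lemma fxE k : f (x k) = (fx k)%:E.
Proof. by rewrite fineK //; apply: f_fin; apply: x_dom. Qed.
Lemma pxE k : Psi (x k) = (px k)%:E.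
Proof. by rewrite fineK //; apply: dom_fin; apply: x_dom. Qed.
Lemma psE k : Psi (s k) = (ps k)%:E.
Proof. by rewrite fineK //; apply: dom_fin; apply: s_dom. Qed.

Lemma conjfE k : conjugate f (g k) = (dot (g k) (x k) - fx k)%:E.
Proof.
apply/eqP; rewrite eq_le; apply/andP; split; last first.
  by have := conj_ge f (g k) (x k); rewrite fxE -EFinB.
apply: ge_ereal_sup => _ [y _ <-].
have [_ pf cf] := hf.
have := grad_ineq cf pf (hgrad (x_dom k)) y.
rewrite fxE; case E: (f y) => [b| |].
- by rewrite -EFinD -EFinB !lee_fin dotBr; lra.
- by rewrite addeNy leNye.
- by move: ((proj1 pf) y); rewrite E.
Qed.

Lemma conjPsiE k : conjugate Psi (- g k) = (- dot (g k) (s k) - ps k)%:E.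
Proof.
apply/eqP; rewrite eq_le; apply/andP; split; last first.
  by have := conj_ge Psi (- g k) (s k); rewrite psE dotNl -EFinB.
apply: ge_ereal_sup => _ [y _ <-].
have := hs k y.
rewrite psE; case E: (Psi y) => [b| |].
- by rewrite -EFinB -!EFinD !lee_fin dotNl; lra.
- by rewrite addeNy leNye.
- by have [_ [pinf _] _] := hPsi; move: (pinf y); rewrite E.
Qed.

Lemma subdiff_s k : subdiff (conjugate Psi) (- g k) (s k).
Proof.
split; first by rewrite conjPsiE.
move=> v; apply: le_trans (conj_ge Psi v (s k)).
rewrite conjPsiE psE -EFinD -EFinB lee_fin opprK dotDr (dotC (s k) v) (dotC (s k)).
lra.
Qed.

Definition gapR k i := fx k + px k + (dot (g i) (x i) - fx i) + (- dot (g i) (s i) - ps i).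

Lemma gapE k i : gap f Psi (x k) (g i) = (gapR k i)%:E.
Proof. by rewrite /gap fxE pxE conjfE conjPsiE /gapR !EFinD. Qed.

Lemma gapR_ge0 k i : 0 <= gapR k i.
Proof.
have h1 := conj_ge f (g i) (x k); have h2 := conj_ge Psi (- g i) (x k).
move: h1 h2; rewrite conjfE conjPsiE fxE pxE -!EFinB !lee_fin dotNl /gapR.
lra.
Qed.

Definition Dk k th := Dcal f Psi gradf (x k) (s k) th.
Definition zz k th := (1 - th) *: x k + th *: s k.

Lemma zz_dom k th : 0 <= th <= 1 -> dom Psi (zz k th).
Proof. by move=> h; apply: conv_dom => //; [exact: x_dom | exact: s_dom]. Qed.

Lemma DE k th : Dk k th = fine (f (zz k th)) - fx k
   - th * (dot (g k) (s k) - dot (g k) (x k)) + fine (Psi (zz k th))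
   - (1 - th) * px k - th * ps k.
Proof.
by rewrite /Dk /Dcal /bregman /= vec_id5 vec_id1 dotZr dotBr /zz /fx /px /ps.
Qed.

Lemma gapRkk k : gapR k k = px k + dot (g k) (x k) - dot (g k) (s k) - ps k.
Proof. rewrite /gapR; ring. Qed.

Lemma stepE k : fx k.+1 + px k.+1 - fx k - px k = - theta k * gapR k k + Dk k (theta k).
Proof.
rewrite DE gapRkk /zz -hx /fx /px; ring.
Qed.

Lemma D_conv k t th : 0 <= t <= 1 -> 0 <= th <= 1 ->
  Dk k (t * th) <= t * Dk k th.
Proof.
move=> t01 th01.
have tth : 0 <= t * th <= 1.
  apply/andP; split; first by apply: mulr_ge0; case/andP: t01; case/andP: th01.
  case/andP: t01 => ? ?; case/andP: th01 => ? ?; nra.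
have zd := zz_dom k th01.
have wd := zz_dom k tth.
rewrite !DE.
have [_ _ cf] := hf; have [_ _ cP] := hPsi.
have h1 := cf (x k) (zz k th) t t01.
have h2 := cP (x k) (zz k th) t t01.
move: h1 h2; rewrite /zz -vec_id6 -/(zz k (t * th)).
rewrite fxE pxE -(fineK (f_fin zd)) -(fineK (dom_fin zd)) -(fineK (f_fin wd)) -(fineK (dom_fin wd)).
rewrite -!EFinM -!EFinD !lee_fin /zz.
move=> h1 h2; lra.
Qed.

Lemma S_iff k th : 0 <= th <= 1 ->
  ((1 - th)%:E * gap f Psi (x k) (gradf (x k))
          + (Dk k th)%:E
        <= (1 - c * th)%:E * gap f Psi (x k) (gradf (x k)))%E =
  (Dk k th <= (1 - c) * th * gapR k k).
Proof.
move=> _; rewrite gapE -!EFinM -EFinD lee_fin.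
apply/idP/idP => h; lra.
Qed.

Lemma thetahat01 k : 0 <= thetahat k <= 1.
Proof. by have [[h _] _] := hmax k. Qed.

Lemma feas k : Dk k (theta k) <= (1 - c) * theta k * gapR k k.
Proof.
have [[th01 hS] _] := hmax k.
move: hS; rewrite -/(Dk k (thetahat k)) S_iff // => hS.
have a0 := gapR_ge0 k k.
have := hthr k; case: (eqVneq (thetahat k) 0) => [->|thn0].
  rewrite mulr0 => /andP[h1 h2].
  have -> : theta k = 0 by apply/eqP; rewrite eq_le h2 h1.
  have := @D_conv k 0 0; rewrite !mulr0 mul0r ler01 lexx /= => /(_ isT isT).
  by rewrite mul0r.
move=> /andP[h1 h2].
have thp : 0 < thetahat k by rewrite lt_def thn0; case/andP: th01.
set t := theta k / thetahat k.
have t0 : 0 <= t by apply: divr_ge0; [by case/andP: (hth k) | exact: ltW].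
have t1 : t <= 1 by rewrite ler_pdivrMr // mul1r.
have -> : theta k = t * thetahat k by rewrite /t divfK // gt_eqF.
apply: (le_trans (D_conv k (t:=t) _ th01)); first by rewrite t0 t1.
have := ler_wpM2l t0 hS; rewrite !mulrA [t * (1 - c)]mulrC.
by rewrite /t !mulrA.
Qed.


Lemma thetahat_lb k : 0 < gapR k k ->
  Num.min 1 ((q * (1 - c) / M * (gapR k k `^ (1 - r))) `^ (q - 1)^-1) <= thetahat k.
Proof.
move=> a0; hyps; set a := gapR k k.
set A := q * (1 - c) / M.
set B := (A * a `^ (1 - r)) `^ (q - 1)^-1.
set m := Num.min 1 B.
have [[th01 _] hub] := hmax k.
have q1 : 0 < q - 1 by lra.
have A0 : 0 < A by rewrite /A; apply: divr_gt0 => //; apply: mulr_gt0; lra.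
have m1 : m <= 1 by rewrite /m ge_min lexx.
have mB : m <= B by rewrite /m ge_min lexx orbT.
rewrite leNgt; apply/negP => hlt.
set th := (thetahat k + m) / 2.
have th0 : 0 < th by case/andP: th01 => ? ?; rewrite /th; lra.
have thm : th < m by rewrite /th; lra.
have tht : thetahat k < th by rewrite /th; lra.
have th1 : 0 <= th <= 1 by apply/andP; split; lra.
have nS : ~ (Dk k th <= (1 - c) * th * a).
  move=> h; have := hub th; rewrite /= -/(Dk k th) S_iff // h th1 => /(_ (conj isT isT)).
  by rewrite leNgt tht.
have hg := hgr (x_dom k) (subdiff_s k) th1.
move: hg; rewrite -/(Dk k th) gapE /= -/a => hg.
apply: nS; apply: (le_trans hg).
have BB : B `^ (q - 1) = A * a `^ (1 - r).
  rewrite /B -powRrM mulVf ?gt_eqF // powRr1 //.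
  by apply: mulr_ge0; [exact: ltW | exact: powR_ge0].
have hP : th `^ (q - 1) < A * a `^ (1 - r).
  rewrite -BB; apply: gt0_ltr_powR => //; rewrite ?nnegrE ?powR_ge0 ?(ltW th0) //.
  lra.
have hq' : th `^ q = th * th `^ (q - 1) by rewrite mulr_powRB1 // ?(ltW th0) //; lra.
have YZ : a `^ (1 - r) * a `^ r = a.
  rewrite -powRD; first by rewrite subrK powRr1 // ltW.
  by apply/implyP => _; rewrite gt_eqF.
set P := th `^ (q - 1) in hP hq'.
set Y := a `^ (1 - r) in hP YZ.
set Z := a `^ r in YZ *.
have Z0 : 0 < Z by rewrite /Z powR_gt0.
have cc0 : 0 < M * th * Z / q by apply: divr_gt0; [apply: mulr_gt0 => //; apply: mulr_gt0|lra].
rewrite hq'.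
have -> : M * (th * P) / q * Z = (M * th * Z / q) * P by rewrite !mulrA; ring.
move: hP; rewrite -(ltr_pM2l cc0) => hP; apply: le_trans (ltW hP) _.
rewrite -YZ /A le_eqVlt; apply/orP; left; apply/eqP; field.
by apply/andP; split; rewrite gt_eqF //; lra.
Qed.



Lemma bigmin_real (u : nat -> R) k : exists m : R,
  [/\ (\big[mine/+oo%E]_(i < k.+1) (u i)%:E = m%:E)%E,
      forall i, (i <= k)%N -> m <= u i & exists2 i, (i <= k)%N & m = u i].
Proof.
elim: k => [|k [m [E h1 h2]]].
  exists (u 0%N); split.
  - by rewrite big_ord_recr big_ord0 /= minye.
  - by move=> i; rewrite leqn0 => /eqP ->.
  - by exists 0%N.
exists (Num.min m (u k.+1)); split.
- by rewrite big_ord_recr /= E -EFin_min.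
- move=> i; rewrite leq_eqVlt => /orP[/eqP ->|hi]; first by rewrite ge_min lexx orbT.
  by rewrite ge_min h1.
- rewrite minEle; case: ifP => _; last by exists k.+1.
  by case: h2 => i hi ->; exists i => //; apply: leqW.
Qed.

Local Notation G := (best_gap f Psi gradf x).

Lemma G_spec k : exists m : R,
  [/\ G k = m%:E, forall i, (i <= k)%N -> m <= gapR k i
    & exists2 i, (i <= k)%N & m = gapR k i].
Proof.
rewrite /best_gap (eq_bigr (fun i : 'I_k.+1 => (gapR k i)%:E)); last by move=> i _; exact: gapE.
exact: bigmin_real.
Qed.

Lemma G_fin k : G k = (fine (G k))%:E.
Proof. by have [m [-> _ _]] := G_spec k. Qed.

Lemma G_ge0 k : 0 <= fine (G k).
Proof. have [m [-> _ [i _ ->]]] := G_spec k; exact: gapR_ge0. Qed.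

Lemma G_le_gap k : fine (G k) <= gapR k k.
Proof. by have [m [-> h _]] := G_spec k; apply: h. Qed.

Lemma G_step k : fine (G k.+1) <= fine (G k) + (fx k.+1 + px k.+1 - fx k - px k).
Proof.
have [m [-> _ [i hi ->]]] := G_spec k.
have [m' [-> h _]] := G_spec k.+1.
apply: le_trans (h i (leqW hi)) _ => /=.
rewrite /gapR; lra.
Qed.

Lemma part1 k : fine (G k.+1) <= fine (G k) * (1 - (c + rho - 1) *
   Num.min 1 ((q * (1 - c) / M * (fine (G k) `^ (1 - r))) `^ (q - 1)^-1)).
Proof.
hyps.
have hst := G_step k; rewrite stepE in hst.
have hfe := feas k.
have a0 := gapR_ge0 k k.
have e0 := G_ge0 k.
have ea := G_le_gap k.
have [th0 th1] := andP (hth k).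
have [h1 h2] := andP (hthr k).
set e := fine (G k) in hst e0 ea *.
set a := gapR k k in hst hfe a0 ea *.
have cta : 0 <= c * theta k * a by apply: mulr_ge0 => //; apply: mulr_ge0 => //; exact: ltW.
have hd : fine (G k.+1) <= e - c * theta k * a by lra.
case: (eqVneq e 0) => [e00|en0].
  by rewrite e00 mul0r; lra.
have ep : 0 < e by rewrite lt_def en0 e0.
have ap : 0 < a by lra.
have hlb := thetahat_lb ap.
set A := q * (1 - c) / M in hlb *.
have A0 : 0 <= A by rewrite /A; apply: divr_ge0; [apply: mulr_ge0; lra | lra].
set mu := Num.min 1 _.
have mu0 : 0 <= mu by rewrite /mu le_min ler01 powR_ge0.
have mu1 : mu <= 1 by rewrite /mu ge_min lexx.
have mumu : mu <= Num.min 1 ((A * a `^ (1 - r)) `^ (q - 1)^-1).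
  rewrite le_min mu1 /= /mu ge_min; apply/orP; right.
  apply: ge0_ler_powR; rewrite ?nnegrE.
  - by rewrite invr_ge0; lra.
  - by apply: mulr_ge0 => //; exact: powR_ge0.
  - by apply: mulr_ge0 => //; exact: powR_ge0.
  apply: ler_wpM2l => //; apply: ge0_ler_powR; rewrite ?nnegrE //; lra.
have hth' : rho * mu <= theta k.
  apply: le_trans h1; apply: ler_wpM2l; [lra | exact: le_trans mumu hlb].
have k1 : rho * mu * e <= theta k * a.
  apply: ler_pM => //; apply: mulr_ge0; lra.
have k2 : c * (rho * mu * e) <= c * (theta k * a) by apply: ler_wpM2l; lra.
have k3 : (c + rho - 1) * (mu * e) <= c * rho * (mu * e).
  apply: ler_wpM2r; first exact: mulr_ge0.
  nra.
have : c * theta k * a = c * (theta k * a) by rewrite mulrA.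
have : c * (rho * mu * e) = c * rho * (mu * e) by rewrite !mulrA.
have : e * (1 - (c + rho - 1) * mu) = e - (c + rho - 1) * (mu * e) by ring.
lra.
Qed.

End Main.

Unset Implicit Arguments. Set Strict Implicit.

Theorem theorem2 (R : realType) (n : nat)
  (f Psi : 'rV[R]_n -> \bar R) (gradf : 'rV[R]_n -> 'rV[R]_n)
  (c rho q r M : R)
  (x s : nat -> 'rV[R]_n) (theta thetahat : nat -> R) :
  closed_proper_convex f -> closed_proper_convex Psi ->
  (* (A1): f differentiable on dom Psi, with gradient gradf *)
  (forall y, dom Psi y -> is_gradient f y (gradf y)) ->
  (* (A2) *)
  (forall y, dom Psi y -> exists z, argmin_lin Psi (gradf y) z) ->
  0 < c < 1 -> 0 < rho < 1 -> 1 < c + rho ->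
  (* the conditional gradient algorithm *)
  dom Psi (x 0%N) ->
  (forall k, argmin_lin Psi (gradf (x k)) (s k)) ->
  (forall k, 0 <= theta k <= 1) ->
  (forall k, x k.+1 = (1 - theta k) *: x k + theta k *: s k) ->
  (forall k, is_max_of
     [set th : R | 0 <= th <= 1 /\
        ((1 - th)%:E * gap f Psi (x k) (gradf (x k))
          + (Dcal f Psi gradf (x k) (s k) th)%:E
        <= (1 - c * th)%:E * gap f Psi (x k) (gradf (x k)))%E]
     (thetahat k)) ->
  (forall k, rho * thetahat k <= theta k <= thetahat k) ->
  (* (q,r)-growth *)
  1 < q -> 0 <= r <= 1 -> 0 < M -> growth_prop f Psi gradf q r M ->
  let G := best_gap f Psi gradf x in
  (forall k : nat,
    (G k.+1 <= (fine (G k) * (1 - (c + rho - 1) *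
       Num.min 1 ((q * (1 - c) / M * (fine (G k) `^ (1 - r))) `^ (q - 1)^-1)))%:E)%E)
  /\
  (r = 1 -> forall k : nat,
    (G k <= (fine (G 0%N) * (1 - (c + rho - 1) *
       Num.min 1 ((q * (1 - c) / M) `^ (q - 1)^-1)) ^+ k)%:E)%E)
  /\
  (r < 1 -> exists k0 : nat,
    (fine (G k0) `^ (1 - r) <= M / (q * (1 - c))) /\
    (forall k : nat, (k < k0)%N -> M / (q * (1 - c)) < fine (G k) `^ (1 - r)) /\
    (forall k : nat, (k <= k0)%N ->
       (G k <= (fine (G 0%N) * (1 - (c + rho - 1)) ^+ k)%:E)%E) /\
    (forall k : nat, (k0 <= k)%N ->
       (G k <= ((fine (G k0) `^ ((r - 1) / (q - 1))
                 + (1 - r) * (c + rho - 1) / (q - 1)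
                   * (q * (1 - c) / M) `^ (q - 1)^-1 * (k - k0)%:R)
                `^ ((q - 1) / (r - 1)))%:E)%E)).
Proof.
move=> hf hPsi hgrad _ hc hrho hcr hx0 hs hth hx hmax hthr hq hr hM hgr G.
have P1 := part1 hf hPsi hgrad hc hrho hcr hx0 hs hth hx hmax hthr hq hr hM hgr.
have Gf := G_fin hf hPsi hgrad hx0 hs hth hx.
have G0 := G_ge0 hf hPsi hgrad hx0 hs hth hx.
rewrite /G; split.
  by move=> k; rewrite [X in (X <= _)%E]Gf lee_fin; exact: P1.
split.
  move=> r1 k; rewrite [X in (X <= _)%E]Gf lee_fin.
  exact: (rate_r1 (e := fun k => fine (best_gap f Psi gradf x k)) hc hrho hcr hq hr hM P1 r1 k).
move=> rlt1.
have [k0 [h1 [h2 [h3 h4]]]] :=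
  rate_rlt1 (e := fun k => fine (best_gap f Psi gradf x k)) hc hrho hcr hq hr hM G0 P1 rlt1.
exists k0; split => //; split => //; split.
  by move=> k hk; rewrite [X in (X <= _)%E]Gf lee_fin; exact: h3.
by move=> k hk; rewrite [X in (X <= _)%E]Gf lee_fin; exact: h4.
Qed.
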